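(* Let $n\ge 2$. Let $V_2$ be the span of all $D_{ij}(x^{\underline a})$ with $\underline a\in I^n$, $1\le i<j\le n$, $a_i\ne0$, $a_j\ne0$. Let $$\mathfrak B_2=\{D_{i_ji_{j+1}}(x^{\underline a}x_{i_j}x_{i_{j+1}})\mid \underline a\in I^n,\ \Omega(\underline a)=\{i_1<\dots<i_s\},\ 1\le j\le s-1\},$$ $$\mathfrak B_1=\{x^{\underline a}\partial_i\mid \underline a\in I^n,\ 1\le i\le n,\ a_i=0,\ a_j\neq p-1\text{ for some }j\neq i\}.$$ Then $\mathfrak B_2$ is a basis of $V_2$, and $\mathfrak B_1\cup\mathfrak B_2$ is a basis of the special algebra $S(n)$.
   Context: $\mathbb F$ is an algebraically closed field of characteristic $p>2$, $I=\{0,\dots,p-1\}$. $\mathcal A(n)$ is the truncated polynomial algebra with basis $x^{\underline a}=x_1^{a_1}\cdots x_n^{a_n}$, $\underline a\in I^n$, $x^{\underline a}x^{\underline b}=x^{\underline a+\underline b}$ ($=0$ if $\underline a+\underline b\notin I^n$). $W(n)=\mathrm{Der}\,\mathcal A(n)$ is free over $\mathcal A(n)$ on $\partial_1,\dots,\partial_n$, $\partial_i(x_j)=\delta_{ij}$. $D_{ij}(f)=\partial_j(f)\partial_i-\partial_i(f)\partial_j$. $S(n)=[\widetilde S(n),\widetilde S(n)]$ with $\widetilde S(n)=\{\sum f_i\partial_i\mid\sum\partial_i(f_i)=0\}$. For $\underline a\in I^n$, $\Omega(\underline a)=\{i\mid a_i\neq p-1\}$. *)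

(* Defs.v *)
From HB Require Import structures.
From mathcomp Require Import all_boot all_order all_algebra.
Set Implicit Arguments. Unset Strict Implicit. Unset Printing Implicit Defensive.
Import GRing.Theory.
Local Open Scope ring_scope.

Section Witt.
Variables (F : fieldType) (p n : nat).

Definition expo := {ffun 'I_n -> 'I_p}.

(* the truncated polynomial algebra A(n): coefficient functions on monomials *)
Definition An := {ffun expo -> F^o}.

(* W(n): the free A(n)-module on d_1..d_n; w (a, i) = coefficient of x^a d_i *)
Definition Wn := {ffun (expo * 'I_n) -> F^o}.

Definition monA (a : expo) : An := [ffun c : expo => ((c == a) : nat)%:R].

Definition xvar (i : 'I_n) : An :=
  [ffun c : expo => ([forall k, (c k : nat) == (k == i) :> nat] : nat)%:R].

(* truncated product: x^a x^b = x^(a+b) if a+b in I^n, 0 otherwise *)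
Definition mulA (f g : An) : An :=
  [ffun c : expo => \sum_(a : expo) \sum_(b : expo)
     (if [forall k, ((a k : nat) + b k)%N == c k] then f a * g b else 0)].

Definition derA (i : 'I_n) (f : An) : An :=
  [ffun c : expo => \sum_(a : expo)
     (if [forall k, (a k : nat) == ((c k : nat) + (k == i))%N] then (a i : nat)%:R * f a else 0)].

Definition compW (w : Wn) (i : 'I_n) : An := [ffun a => w (a, i)].

Definition mkW (fs : 'I_n -> An) : Wn := [ffun ai => fs ai.2 ai.1].

Definition actW (w : Wn) (g : An) : An := \sum_(i < n) mulA (compW w i) (derA i g).

Definition bracketW (u v : Wn) : Wn :=
  mkW (fun j => actW u (compW v j) - actW v (compW u j)).

Definition monW (a : expo) (i : 'I_n) : Wn := mkW (fun k => if k == i then monA a else 0).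

Definition Dij (i j : 'I_n) (f : An) : Wn :=
  mkW (fun k => (if k == i then derA j f else 0) - (if k == j then derA i f else 0)).

Definition in_Stilde (w : Wn) : Prop := \sum_(i < n) derA i (compW w i) = 0.

(* S(n) = [tilde S(n), tilde S(n)]: the linear span of brackets of elements of tilde S(n) *)
Definition in_Sn (w : Wn) : Prop :=
  exists s : seq (F * Wn * Wn),
    (forall t, t \in s -> in_Stilde t.1.2 /\ in_Stilde t.2) /\
    w = \sum_(t <- s) t.1.1 *: bracketW t.1.2 t.2.

Definition Omega (a : expo) : seq 'I_n := [seq i <- enum 'I_n | (a i : nat) != p.-1].

Definition V2 : {vspace Wn} :=
  <<[seq Dij ija.1 ija.2.1 (monA ija.2.2) |
       ija <- [seq ija : ('I_n * ('I_n * expo))%type <- [seq (i, ja) | i <- enum 'I_n, ja <- [seq (j, a) | j <- enum 'I_n, a <- enum expo]] |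
                 [&& (ija.1 < ija.2.1)%N, (ija.2.2 ija.1 : nat) != 0%N
                   & (ija.2.2 ija.2.1 : nat) != 0%N]]]>>%VS.

Definition B2 : seq Wn :=
  undup [seq Dij ik.1 ik.2 (mulA (mulA (monA a) (xvar ik.1)) (xvar ik.2)) |
           a <- enum expo, ik <- zip (Omega a) (behead (Omega a))].

Definition B1 : seq Wn :=
  undup [seq monW ai.1 ai.2 |
           ai <- [seq ai : (expo * 'I_n)%type <- [seq (a, i) | a <- enum expo, i <- enum 'I_n] |
                    ((ai.1 ai.2 : nat) == 0%N) &&
                    [exists j, (j != ai.2) && ((ai.1 j : nat) != p.-1)]]].

Definition is_basis_of (P : Wn -> Prop) (B : seq Wn) : Prop :=
  [/\ free B, (forall b, b \in B -> P b) & (forall w, P w -> w \in <<B>>%VS)].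

End Witt.

(* Main.v *)
Require Import Defs.
From HB Require Import structures.
From mathcomp Require Import all_boot all_order all_algebra.
From mathcomp Require Import zify.
Import GRing.Theory.
Local Open Scope ring_scope.
Set Implicit Arguments. Unset Strict Implicit. Unset Printing Implicit Defensive.

Section Work.
Variables (F : fieldType) (p n : nat).
Hypothesis charp : p \in [pchar F].
Hypothesis p1 : (1 < p)%N.

Local Notation expo := (expo p n).
Local Notation An := (An F p n).
Local Notation Wn := (Wn F p n).
Local Notation mA := (@Defs.mulA F p n).
Local Notation mon := (@monA F p n).

Lemma sum_single (V : nmodType) (T : finType) (x0 : T) (G : T -> V) :
  (forall x, x != x0 -> G x = 0) -> \sum_x G x = G x0.
Proof. by move=> h; rewrite (bigD1 x0) //= big1 ?addr0 // => x /h. Qed.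
Arguments sum_single {V T} x0 {G}.

Lemma An_ext (f g : An) : (forall c : expo, f c = g c) -> f = g.
Proof. by move=> h; apply/ffunP. Qed.

Lemma scaleF (k x : F^o) : k *: x = k * x. Proof. by []. Qed.

Lemma addAE (f g : An) c : (f + g) c = f c + g c. Proof. by rewrite ffunE. Qed.
Lemma scaleAE k (f : An) c : (k *: f) c = k * f c. Proof. by rewrite ffunE. Qed.

Lemma monAE a c : mon a c = (c == a)%:R.
Proof. by rewrite ffunE. Qed.

Lemma expandA (f : An) : f = \sum_a (f a : F) *: mon a.
Proof.
apply/ffunP => c; rewrite sum_ffunE (sum_single c) => [|a ha].
  by rewrite !ffunE eqxx -[_ *: _]/(_ * 1) mulr1.
by rewrite !ffunE eq_sym (negbTE ha) -[_ *: _]/(_ * 0) mulr0.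
Qed.

Lemma mulADl (f g h : An) : mA (f + g) h = mA f h + mA g h.
Proof.
apply/ffunP => c; rewrite !ffunE -big_split; apply: eq_bigr => a _.
rewrite -big_split; apply: eq_bigr => b _; case: ifP => _ /=.
  by rewrite !ffunE mulrDl.
by rewrite addr0.
Qed.

Lemma mulAZl k (f g : An) : mA (k *: f) g = k *: mA f g.
Proof.
apply/ffunP => c; rewrite !ffunE scaleF mulr_sumr; apply: eq_bigr => a _.
rewrite mulr_sumr; apply: eq_bigr => b _; case: ifP; rewrite ?mulr0 //.
by rewrite !ffunE mulrA.
Qed.

Lemma mulAC (f g : An) : mA f g = mA g f.
Proof.
apply/ffunP => c; rewrite !ffunE exchange_big; apply: eq_bigr => a _.
apply: eq_bigr => b _.
have -> : [forall k, ((b k : nat) + a k)%N == c k] = [forall k, ((a k : nat) + b k)%N == c k].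
  by apply: eq_forallb => k; rewrite addnC.
by case: ifP; rewrite // mulrC.
Qed.

Lemma mulA0l (g : An) : mA 0 g = 0.
Proof.
apply/ffunP => c; rewrite !ffunE; apply: big1 => a _; apply: big1 => b _.
by case: ifP => // _; rewrite ffunE mul0r.
Qed.

Lemma mulADr (f g h : An) : mA h (f + g) = mA h f + mA h g.
Proof. by rewrite !(mulAC h) mulADl. Qed.
Lemma mulAZr k (f g : An) : mA g (k *: f) = k *: mA g f.
Proof. by rewrite !(mulAC g) mulAZl. Qed.
Lemma mulA0r (g : An) : mA g 0 = 0.
Proof. by rewrite mulAC mulA0l. Qed.

Lemma mulA_suml I (r : seq I) (P : pred I) (Fs : I -> An) g :
  mA (\sum_(i <- r | P i) Fs i) g = \sum_(i <- r | P i) mA (Fs i) g.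
Proof. exact: (big_morph (fun f => mA f g) (fun x y => mulADl x y g) (mulA0l g)). Qed.
Lemma mulA_sumr I (r : seq I) (P : pred I) (Fs : I -> An) g :
  mA g (\sum_(i <- r | P i) Fs i) = \sum_(i <- r | P i) mA g (Fs i).
Proof. rewrite mulAC mulA_suml; apply: eq_bigr => i _; exact: mulAC. Qed.

Lemma mulA_mon a b c :
  mA (mon a) (mon b) c = ([forall k, ((a k : nat) + b k)%N == c k] : nat)%:R.
Proof.
rewrite ffunE (sum_single a) => [|a' ha].
  rewrite (sum_single b) => [|b' hb]; first by rewrite !ffunE !eqxx mulr1; case: ifP.
  by case: ifP => // _; rewrite !ffunE (negbTE hb) mulr0.
by apply: big1 => b' _; case: ifP => // _; rewrite !ffunE (negbTE ha) mul0r.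
Qed.


Definition oinc (x : 'I_p) : 'I_p := insubd x x.+1.
Definition odec (x : 'I_p) : 'I_p := insubd x x.-1.
Definition incE (c : expo) (i : 'I_n) : expo :=
  [ffun t => if t == i then oinc (c t) else c t].
Definition decE (c : expo) (i : 'I_n) : expo :=
  [ffun t => if t == i then odec (c t) else c t].

Lemma expoP (x y : expo) : (forall t, (x t : nat) = y t) -> x = y.
Proof. by move=> h; apply/ffunP => t; apply/val_inj/h. Qed.

Lemma expo_eqE (x y : expo) : (x == y) = [forall t, (x t : nat) == y t].
Proof.
apply/eqP/forallP => [-> //|h]; apply: expoP => t; exact/eqP/h.
Qed.

Lemma incE_v (c : expo) (i t : 'I_n) : ((c i).+1 < p)%N -> (incE c i t : nat) = (c t + (t == i))%N.
Proof.
move=> h; rewrite ffunE; case: eqP => [->|_]; last by rewrite addn0.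
by rewrite val_insubd h addn1.
Qed.

Lemma decE_v (c : expo) (i t : 'I_n) : (decE c i t : nat) = (c t - (t == i))%N.
Proof.
rewrite ffunE; case: eqP => [->|_]; last by rewrite subn0.
rewrite val_insubd subn1; case: ifP => // /negbT h.
by have := ltn_ord (c i); rewrite -subn1; move: h; rewrite -subn1; lia.
Qed.

Lemma derAD i (f g : An) : derA i (f + g) = derA i f + derA i g.
Proof.
apply/ffunP => c; rewrite !ffunE -big_split; apply: eq_bigr => a _.
by case: ifP => _ /=; rewrite ?addr0 // ffunE mulrDr.
Qed.

Lemma derAZ i k (f : An) : derA i (k *: f) = k *: derA i f.
Proof.
apply/ffunP => c; rewrite !ffunE scaleF mulr_sumr; apply: eq_bigr => a _.
by case: ifP => _; rewrite ?mulr0 // ffunE scaleF mulrCA.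
Qed.

Lemma derA0 i : derA i (0 : An) = 0.
Proof. by apply/ffunP => c; rewrite !ffunE; apply: big1 => a _; case: ifP; rewrite // ffunE mulr0. Qed.

Lemma derAN i (f : An) : derA i (- f) = - derA i f.
Proof. by rewrite -scaleN1r derAZ scaleN1r. Qed.

Lemma derAB i (f g : An) : derA i (f - g) = derA i f - derA i g.
Proof. by rewrite derAD derAN. Qed.

Lemma derA_sum i I (r : seq I) (P : pred I) (Fs : I -> An) :
  derA i (\sum_(j <- r | P j) Fs j) = \sum_(j <- r | P j) derA i (Fs j).
Proof. exact: (big_morph (derA i) (derAD i) (derA0 i)). Qed.

Lemma derA_E1 i (f : An) (c : expo) : ((c i).+1 < p)%N ->
  derA i f c = ((c i).+1)%:R * f (incE c i).
Proof.
move=> h; rewrite ffunE (sum_single (incE c i)) => [|a ha].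
  rewrite ifT; first by rewrite incE_v // eqxx addn1.
  by apply/forallP => k; rewrite incE_v.
case: ifP => // /forallP hk; case/negP: ha; apply/eqP/expoP => t.
by rewrite incE_v // (eqP (hk t)).
Qed.

Lemma derA_E2 i (f : An) (c : expo) : ~~ ((c i).+1 < p)%N -> derA i f c = 0.
Proof.
move=> h; rewrite ffunE; apply: big1 => a _; case: ifP => // /forallP /(_ i) /eqP.
by rewrite eqxx addn1 => e; have := ltn_ord (a i); rewrite e (negbTE h).
Qed.

Lemma derA_mon i (a : expo) : derA i (mon a) = (a i)%:R *: mon (decE a i).
Proof.
apply: An_ext => c; rewrite [RHS]ffunE scaleF monAE.
have hai := ltn_ord (a i); have hci := ltn_ord (c i).
case: (ltnP (c i).+1 p) => h.
  rewrite derA_E1 // monAE.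
  case E: (incE c i == a).
    move/eqP: E => E; rewrite -E incE_v // eqxx addn1 (_ : (c == _) = true) //.
    by apply/eqP/expoP => t; rewrite decE_v incE_v //; case: eqP => _; rewrite ?addnK ?subn0 ?addn0.
  case E2: (c == decE a i); rewrite ?mulr0 //.
  have [a0|ha] := eqVneq (a i : nat) 0%N; first by rewrite a0 mul0r.
  case/negP: E; apply/eqP/expoP => t; rewrite incE_v // (eqP E2) decE_v.
  case: (t =P i) => [->|]; rewrite ?subn0 ?addn0 //; lia.
rewrite derA_E2 -?leqNgt //; case E2: (c == decE a i); rewrite ?mulr0 //.
move/eqP: E2 => /(congr1 (fun x : expo => (x i : nat))); rewrite decE_v eqxx /= => e; exfalso; lia.
Qed.


Lemma cond_dec (a b c : expo) i : (a i : nat) != 0%N ->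
  [forall k, ((decE a i k : nat) + b k)%N == c k] =
  [forall k, ((a k : nat) + b k)%N == (c k + (k == i))%N].
Proof.
move=> h; apply: eq_forallb => k; rewrite decE_v.
case: (k =P i) => [->|_] /=; rewrite ?subn0 ?addn0 //.
by apply/eqP/eqP; lia.
Qed.

Lemma cond_dec2 (a b c : expo) i : (b i : nat) != 0%N ->
  [forall k, ((a k : nat) + decE b i k)%N == c k] =
  [forall k, ((a k : nat) + b k)%N == (c k + (k == i))%N].
Proof.
move=> h; apply: eq_forallb => k; rewrite decE_v.
case: (k =P i) => [->|_] /=; rewrite ?subn0 ?addn0 //.
by apply/eqP/eqP; lia.
Qed.

Lemma leib_mon i (a b : expo) :
  derA i (mA (mon a) (mon b)) = mA (derA i (mon a)) (mon b) + mA (mon a) (derA i (mon b)).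
Proof.
rewrite !derA_mon mulAZl mulAZr; apply: An_ext => c.
rewrite addAE !scaleAE !mulA_mon.
set X := [forall k, ((a k : nat) + b k)%N == (c k + (k == i))%N].
have t1 : (a i)%:R * ([forall k, ((decE a i k : nat) + b k)%N == c k] : nat)%:R
          = (a i)%:R * (X : nat)%:R :> F.
  by have [->|h] := eqVneq (a i : nat) 0%N; rewrite ?mul0r // cond_dec.
have t2 : (b i)%:R * ([forall k, ((a k : nat) + decE b i k)%N == c k] : nat)%:R
          = (b i)%:R * (X : nat)%:R :> F.
  by have [->|h] := eqVneq (b i : nat) 0%N; rewrite ?mul0r // cond_dec2.
rewrite t1 t2 -mulrDl -natrD.
have hci := ltn_ord (c i).
case: (ltnP (c i).+1 p) => h.
  rewrite derA_E1 // mulA_mon.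
  have -> : [forall k, ((a k : nat) + b k)%N == incE c i k] = X.
    by apply: eq_forallb => k; rewrite incE_v.
  case EX: X; rewrite ?mulr0 //.
  by move/forallP: EX => /(_ i) /eqP; rewrite eqxx addn1 => ->.
rewrite derA_E2 -?leqNgt //.
case EX: X; rewrite ?mulr0 //.
move/forallP: EX => /(_ i) /eqP; rewrite eqxx addn1 => e.
by rewrite e (_ : (c i).+1 = p) ?(pcharf0 charp) ?mul0r //; apply/eqP; rewrite eqn_leq h hci.
Qed.

Lemma mulA_linl (k : expo -> F) (Fs : expo -> An) g :
  mA (\sum_a (k a : F) *: Fs a) g = \sum_a k a *: mA (Fs a) g.
Proof.
rewrite (mulA_suml (index_enum _) xpredT (fun a => k a *: Fs a)).
by apply: eq_bigr => a _; rewrite mulAZl.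
Qed.

Lemma mulA_linr (k : expo -> F) (Fs : expo -> An) g :
  mA g (\sum_a (k a : F) *: Fs a) = \sum_a k a *: mA g (Fs a).
Proof.
rewrite (mulA_sumr (index_enum _) xpredT (fun a => k a *: Fs a)).
by apply: eq_bigr => a _; rewrite mulAZr.
Qed.

Lemma derA_lin i (k : expo -> F) (Fs : expo -> An) :
  derA i (\sum_a (k a : F) *: Fs a) = \sum_a k a *: derA i (Fs a).
Proof.
rewrite (derA_sum i (index_enum _) xpredT (fun a => k a *: Fs a)).
by apply: eq_bigr => a _; rewrite derAZ.
Qed.

Lemma leib1 i a (g : An) :
  derA i (mA (mon a) g) = mA (derA i (mon a)) g + mA (mon a) (derA i g).
Proof.
rewrite (expandA g) !mulA_linr !derA_lin !mulA_linr -big_split /=.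
by apply: eq_bigr => b _; rewrite leib_mon scalerDr.
Qed.

Lemma leib i (f g : An) :
  derA i (mA f g) = mA (derA i f) g + mA f (derA i g).
Proof.
rewrite (expandA f) !mulA_linl !derA_lin !mulA_linl -big_split /=.
by apply: eq_bigr => a _; rewrite leib1 scalerDr.
Qed.


Lemma compW_mkW (fs : 'I_n -> An) k : compW (mkW fs) k = fs k.
Proof. by apply/ffunP => c; rewrite !ffunE. Qed.

Lemma Wext (u v : Wn) : (forall k, compW u k = compW v k) -> u = v.
Proof.
move=> h; apply/ffunP => [[c k]]; have := congr1 (fun f : An => f c) (h k).
by rewrite !ffunE.
Qed.

Lemma compWD (u v : Wn) k : compW (u + v) k = compW u k + compW v k.
Proof. by apply/ffunP => c; rewrite !ffunE. Qed.
Lemma compW0 k : compW (0 : Wn) k = 0.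
Proof. by apply/ffunP => c; rewrite !ffunE. Qed.
Lemma compWN (u : Wn) k : compW (- u) k = - compW u k.
Proof. by apply/ffunP => c; rewrite !ffunE. Qed.
Lemma compWB (u v : Wn) k : compW (u - v) k = compW u k - compW v k.
Proof. by rewrite compWD compWN. Qed.
Lemma compWZ (u : Wn) (c : F) k : compW (c *: u) k = c *: compW u k.
Proof. by apply/ffunP => x; rewrite !ffunE. Qed.
Lemma compW_sum I (r : seq I) (P : pred I) (Fs : I -> Wn) k :
  compW (\sum_(i <- r | P i) Fs i) k = \sum_(i <- r | P i) compW (Fs i) k.
Proof.
elim: r => [|x r IH]; first by rewrite !big_nil compW0.
by rewrite !big_cons; case: (P x); rewrite ?compWD IH.
Qed.

Lemma compW_Dij (i j m : 'I_n) (f : An) :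
  compW (Dij i j f) m = (if m == i then derA j f else 0) - (if m == j then derA i f else 0).
Proof. by rewrite compW_mkW. Qed.

Lemma compW_monW (a : expo) (i k : 'I_n) : compW (monW F a i) k = if k == i then mon a else 0.
Proof. by rewrite compW_mkW. Qed.

Lemma bracket_div0 (u v : Wn) : in_Stilde u -> in_Stilde v ->
  bracketW u v = \sum_k \sum_l Dij k l (mA (compW u l) (compW v k)).
Proof.
rewrite /in_Stilde => hu hv; apply: Wext => m.
rewrite compW_mkW /actW compW_sum.
under [RHS]eq_bigr => k _ do rewrite compW_sum.
under [RHS]eq_bigr => k _ do under eq_bigr => l _ do rewrite compW_Dij.
under [RHS]eq_bigr => k _ do rewrite sumrB.
rewrite [RHS]sumrB.
rewrite [X in _ = X - _](sum_single m) => [|k hk]; last first.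
  by apply: big1 => l _; rewrite eq_sym (negbTE hk).
rewrite eqxx.
have -> : \sum_k \sum_l (if m == l then derA k (mA (compW u l) (compW v k)) else 0)
        = \sum_k derA k (mA (compW u m) (compW v k)).
  apply: eq_bigr => k _; rewrite (sum_single m) ?eqxx // => l hl.
  by rewrite eq_sym (negbTE hl).
under [X in _ = X - _]eq_bigr => l _ do rewrite leib.
under [X in _ = _ - X]eq_bigr => l _ do rewrite leib.
rewrite !big_split /= -mulA_suml -mulA_sumr hu hv mulA0l mulA0r add0r addr0.
congr (_ - _); apply: eq_bigr => k _; exact: mulAC.
Qed.


Lemma Dij_ii i (f : An) : Dij i i f = 0.
Proof. by apply: Wext => k; rewrite compW_Dij compW0 subrr. Qed.

Lemma Dij_sym i j (f : An) : Dij j i f = - Dij i j f.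
Proof. by apply: Wext => k; rewrite compWN !compW_Dij opprB. Qed.

Lemma DijD i j (f g : An) : Dij i j (f + g) = Dij i j f + Dij i j g.
Proof.
apply: Wext => k; rewrite compWD !compW_Dij !derAD.
case: (k == i); case: (k == j); rewrite ?subr0 ?sub0r ?addr0 //.
- by rewrite opprD addrACA.
- by rewrite opprD.
Qed.

Lemma DijZ i j (c : F) (f : An) : Dij i j (c *: f) = c *: Dij i j f.
Proof.
apply: Wext => k; rewrite compWZ !compW_Dij !derAZ.
case: (k == i); case: (k == j) => /=; rewrite ?scaler0 ?subr0 ?sub0r //. all: try by rewrite scalerBr. all: try by rewrite scalerN.
all: by symmetry; apply: scaler0.
Qed.

Lemma Dij0 i j : Dij i j (0 : An) = 0.
Proof. by apply: Wext => k; rewrite compW_Dij !derA0 compW0; case: (k == i); case: (k == j) => /=; rewrite ?subr0 ?sub0r ?oppr0. Qed.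

Lemma Dij_lin i j (k : expo -> F) (Fs : expo -> An) :
  Dij i j (\sum_a (k a : F) *: Fs a) = \sum_a k a *: Dij i j (Fs a).
Proof.
elim: (index_enum _) => [|x r IH]; first by rewrite !big_nil Dij0.
by rewrite !big_cons DijD DijZ IH.
Qed.

Lemma DijmonE i j (b : expo) :
  Dij i j (mon b) = (b j)%:R *: monW F (decE b j) i - (b i)%:R *: monW F (decE b i) j.
Proof.
apply: Wext => k; rewrite compW_Dij compWB !compWZ !compW_monW !derA_mon.
by case: (k == i); case: (k == j); rewrite ?scaler0.
Qed.

Lemma mulA_monE (a b c : expo) : (forall k, (a k : nat) + b k = c k)%N ->
  mA (mon a) (mon b) = mon c.
Proof.
move=> h; apply: An_ext => x; rewrite mulA_mon monAE expo_eqE.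
suff -> : [forall k, ((a k:nat) + b k)%N == x k] = [forall t, (x t : nat) == c t] by [].
by apply: eq_forallb => k; rewrite h eq_sym.
Qed.

Definition unitE (i : 'I_n) : expo :=
  [ffun k => if k == i then Ordinal p1 else Ordinal (ltnW p1)].

Lemma unitE_v i k : (unitE i k : nat) = (k == i).
Proof. by rewrite ffunE; case: (k == i). Qed.

Lemma xvarE i : xvar F p i = mon (unitE i).
Proof.
apply: An_ext => c; rewrite monAE ffunE expo_eqE.
suff -> : [forall k, (c k : nat) == (k == i)] = [forall t, (c t : nat) == unitE i t] by [].
by apply: eq_forallb => k; rewrite unitE_v.
Qed.

Lemma incE2_v (a : expo) i j t : i != j -> ((a i).+1 < p)%N -> ((a j).+1 < p)%N ->
  (incE (incE a i) j t : nat) = (a t + (t == i) + (t == j))%N.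
Proof.
move=> hij hi hj; have hji : (j == i) = false by rewrite eq_sym (negbTE hij).
have hj' : ((incE a i j : nat).+1 < p)%N by rewrite incE_v // hji addn0.
by rewrite incE_v // incE_v.
Qed.

Lemma B2elt (a : expo) i j : i != j -> ((a i).+1 < p)%N -> ((a j).+1 < p)%N ->
  Dij i j (mA (mA (mon a) (xvar F p i)) (xvar F p j)) = Dij i j (mon (incE (incE a i) j)).
Proof.
move=> hij hi hj; rewrite !xvarE (@mulA_monE a (unitE i) (incE a i)); last first.
  by move=> k; rewrite unitE_v incE_v.
rewrite (@mulA_monE _ (unitE j) (incE (incE a i) j)) // => k.
by rewrite unitE_v incE2_v // incE_v.
Qed.

Definition EE (a : expo) i j := Dij i j (mon (incE (incE a i) j)).
Definition GG (a : expo) i := monW F (incE a i) i.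

Lemma Eform (a : expo) i j : i != j -> ((a i).+1 < p)%N -> ((a j).+1 < p)%N ->
  EE a i j = ((a j).+1)%:R *: GG a i - ((a i).+1)%:R *: GG a j.
Proof.
move=> hij hi hj; have hji : (j == i) = false by rewrite eq_sym (negbTE hij).
rewrite /EE DijmonE !incE2_v // !eqxx (negbTE hij) hji /= !addn0 !addn1 /GG.
have -> : decE (incE (incE a i) j) j = incE a i.
  apply: expoP => t; rewrite decE_v incE2_v // incE_v //.
  by case: (t =P j) => [->|]; rewrite ?addnK ?subn0 ?addn0.
have -> : decE (incE (incE a i) j) i = incE a j.
  apply: expoP => t; rewrite decE_v incE2_v // incE_v //.
  case: (t =P i) => [->|]; rewrite ?(negbTE hij); case: (t =P j) => _ /=; rewrite ?addnK ?subn0 ?addn0 //; lia.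
by [].
Qed.

Lemma rel3 (a : expo) k m l : k != m -> m != l -> k != l ->
  ((a k).+1 < p)%N -> ((a m).+1 < p)%N -> ((a l).+1 < p)%N ->
  ((a m).+1)%:R *: EE a k l = ((a l).+1)%:R *: EE a k m + ((a k).+1)%:R *: EE a m l.
Proof.
move=> hkm hml hkl hk hm hl; rewrite !Eform //.
rewrite !scalerBr !scalerA.
set X := GG a k; set Y := GG a m; set Z := GG a l.
rewrite [((a l).+1%:R * (a k).+1%:R)]mulrC [((a l).+1%:R * (a m).+1%:R)]mulrC.
rewrite [((a k).+1%:R * (a m).+1%:R)]mulrC.
by rewrite addrA subrK.
Qed.


Lemma span_eval0 (X : seq Wn) (c : expo * 'I_n) (v : Wn) :
  (forall x, x \in X -> x c = 0) -> v \in <<X>>%VS -> v c = 0.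
Proof.
move=> hX hv; rewrite (coord_span (X := in_tuple X) hv).
rewrite sum_ffunE; apply: big1 => i _; rewrite ffunE hX; first exact: scaler0.
exact: (mem_nth 0 (ltn_ord i)).
Qed.

Lemma tri_free (s : seq Wn) (piv : Wn -> expo * 'I_n) (r : Wn -> nat) :
  uniq s -> (forall b, b \in s -> b (piv b) != 0) ->
  (forall b b', b \in s -> b' \in s -> b' != b -> b' (piv b) != 0 -> (r b' < r b)%N) ->
  free s.
Proof.
have [N] := ubnP (size s); elim: N s => // N IH s hs us hp ht.
case: s hs us hp ht => [|x0 s0] hs us hp ht; first exact: nil_free.
set s := x0 :: s0.
have exk : exists k, has (fun x => r x == k) s by exists (r x0); rewrite /= eqxx.
case: (ex_minnP exk) => k /hasP [m ms /eqP rm] kmin.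
rewrite (perm_free (perm_to_rem ms)) free_cons; apply/andP; split.
  apply/negP => hm.
  have h0 : m (piv m) = 0.
    apply: (span_eval0 _ hm) => x; rewrite (mem_rem_uniq _ us) => /andP [xm xs].
    apply/eqP; apply/negP => /negP hx.
    have := ht m x ms xs xm hx; rewrite rm ltnNge.
    by have -> : (k <= r x)%N by apply: kmin; apply/hasP; exists x.
  by move: (hp m ms); rewrite h0 eqxx.
apply: IH.
- by rewrite size_rem // -ltnS; apply: leq_trans hs.
- exact: rem_uniq.
- by move=> b /mem_rem; apply: hp.
- by move=> b b' /mem_rem hb /mem_rem hb'; apply: ht.
Qed.


Lemma mem_Omega (a : expo) i : (i \in Omega a) = ((a i).+1 < p)%N.
Proof.
rewrite mem_filter mem_enum andbT; have h := ltn_ord (a i).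
by apply/idP/idP => h'; lia.
Qed.

Definition ltO := fun x y : 'I_n => (x < y)%N.

Lemma Omega_sorted (a : expo) : sorted ltO (Omega a).
Proof.
apply: sorted_filter; first by move=> x y z; apply: ltn_trans.
by have := iota_ltn_sorted 0 n; rewrite -val_enum_ord sorted_map.
Qed.

Lemma Omega_uniq (a : expo) : uniq (Omega a).
Proof. by rewrite filter_uniq // enum_uniq. Qed.

Section Zb.
Variable T : eqType.
Implicit Types s : seq T.

Lemma zb_mem s x y : (x, y) \in zip s (behead s) -> x \in s /\ y \in s.
Proof.
elim: s => [|z s IH] //=; case: s IH => [|w s] IH //=.
rewrite in_cons => /orP [/eqP [-> ->]|h].
  by rewrite !in_cons !eqxx orbT.
by case: (IH h) => h1 h2; rewrite !in_cons in h1 h2 *; rewrite h1 h2 !orbT.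
Qed.

Lemma zb_rel (r : rel T) s x y : sorted r s -> (x, y) \in zip s (behead s) -> r x y.
Proof.
elim: s => [|z s IH] //=; case: s IH => [|w s] IH //= /andP [hzw hp].
rewrite in_cons => /orP [/eqP [-> ->] //|h].
exact: IH.
Qed.

Lemma zb_uniq s x y y' : uniq s -> (x, y) \in zip s (behead s) ->
  (x, y') \in zip s (behead s) -> y = y'.
Proof.
elim: s => [|z s IH] //=; case: s IH => [|w s] IH //= /andP [hz hu].
rewrite !in_cons => /orP [/eqP [ex ey]|h1] /orP [/eqP [ex' ey']|h2].
- by rewrite ey ey'.
- case: (zb_mem h2) => hx _; move: hz; by rewrite -ex hx.
- case: (zb_mem h1) => hx _; move: hz; by rewrite -ex' hx.
- exact: IH.
Qed.
End Zb.

Lemma zb_consec (s : seq 'I_n) x y : sorted ltO s -> x \in s -> y \in s -> (x < y)%N ->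
  (forall m, m \in s -> (x < m)%N -> (m < y)%N -> False) ->
  (x, y) \in zip s (behead s).
Proof.
elim: s => [|z s IH] //= hs; rewrite !in_cons => hx hy hxy hm.
have hps : sorted ltO s by move: hs; case: (s) => //= w t /andP [].
have hall : all (ltO z) s.
  by apply: order_path_min => //; move=> u v w; apply: ltn_trans.
case: s IH hs hps hall hx hy hm => [|w s] IH hs hps hall hx hy hm.
  by move: hx hy; rewrite !in_nil !orbF => /eqP e1 /eqP e2; move: hxy; rewrite e1 e2 ltnn.
rewrite /= in_cons.
case/orP: hx => [/eqP exz|hx].
  subst z; case/orP: hy => [/eqP eyx|hy]; first by rewrite eyx ltnn in hxy.
  case: (w =P y) => [-> //|nwy]; first by rewrite eqxx.
  exfalso; apply: (hm w); rewrite ?in_cons ?eqxx ?orbT //.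
    by move: hall => /= /andP [].
  move: hy; rewrite in_cons => /orP [/eqP e|hy]; first by case: nwy.
  have : all (ltO w) s. apply: order_path_min; [move=> u v t; apply: ltn_trans | exact: hps].
  by move/allP/(_ y hy).
apply/orP; right; apply: IH => //.
- case/orP: hy => [/eqP eyz|//]; subst z.
  have := allP hall x hx; rewrite /ltO => h; move: hxy; lia.
- by move=> m hm'; apply: hm; rewrite in_cons hm' orbT.
Qed.


Lemma zb_props (a : expo) i j : (i, j) \in zip (Omega a) (behead (Omega a)) ->
  [/\ (i < j)%N, ((a i).+1 < p)%N & ((a j).+1 < p)%N].
Proof.
move=> h; have [hi hj] := zb_mem h; have := zb_rel (Omega_sorted a) h.
by rewrite -!mem_Omega hi hj.
Qed.

Lemma neq_of_lt (i j : 'I_n) : (i < j)%N -> i != j.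
Proof. by move=> h; apply/eqP => e; rewrite e ltnn in h. Qed.

Lemma B2_in (a : expo) i j : (i, j) \in zip (Omega a) (behead (Omega a)) ->
  EE a i j \in B2 F p n.
Proof.
move=> h; have [hij hi hj] := zb_props h.
rewrite /B2 mem_undup /EE -B2elt //; last exact: neq_of_lt.
apply/allpairsPdep; exists a, (i, j); split => //; exact: mem_enum.
Qed.

Lemma B2_mem b : b \in B2 F p n -> exists (a : expo) (i j : 'I_n),
  (i, j) \in zip (Omega a) (behead (Omega a)) /\ b = EE a i j.
Proof.
rewrite /B2 mem_undup => /allpairsPdep [a [[i j] [_ h ->]]].
have [hij hi hj] := zb_props h.
by exists a, i, j; split => //=; rewrite B2elt //; exact: neq_of_lt.
Qed.

Lemma B1_in (a : expo) i j : (a i : nat) = 0%N -> j != i -> (a j : nat) != p.-1 ->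
  monW F a i \in B1 F p n.
Proof.
move=> h0 hji hj; rewrite /B1 mem_undup.
apply/mapP; exists (a, i) => //.
rewrite mem_filter /= h0 eqxx /=; apply/andP; split.
  by apply/existsP; exists j; rewrite hji hj.
by apply: allpairs_f; rewrite mem_enum.
Qed.

Lemma B1_mem b : b \in B1 F p n -> exists (a : expo) (i : 'I_n), [/\ (a i : nat) = 0%N,
  (exists j, j != i /\ (a j : nat) != p.-1) & b = monW F a i].
Proof.
rewrite /B1 mem_undup => /mapP [[a i]]; rewrite mem_filter /= => /andP [/andP [/eqP h0 /existsP [j /andP [hj1 hj2]]] _] ->.
by exists a, i; split => //; exists j.
Qed.

Definition V2gens : seq Wn :=
  [seq Dij ija.1 ija.2.1 (mon ija.2.2) |
       ija <- [seq ija : ('I_n * ('I_n * expo))%type <- [seq (i, ja) | i <- enum 'I_n, ja <- [seq (j, a) | j <- enum 'I_n, a <- enum expo]] |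
                 [&& (ija.1 < ija.2.1)%N, (ija.2.2 ija.1 : nat) != 0%N
                   & (ija.2.2 ija.2.1 : nat) != 0%N]]].

Lemma V2E : V2 F p n = <<V2gens>>%VS.
Proof. by []. Qed.

Lemma V2gens_in (i j : 'I_n) (b : expo) : (i < j)%N -> (b i : nat) != 0%N -> (b j : nat) != 0%N ->
  Dij i j (mon b) \in V2gens.
Proof.
move=> hij hi hj.
apply/mapP; exists (i, (j, b)) => //.
rewrite mem_filter /= hij hi hj /=.
by apply: allpairs_f; rewrite ?mem_enum //; apply: allpairs_f; rewrite mem_enum.
Qed.

Lemma V2gens_mem w : w \in V2gens -> exists (i j : 'I_n) (b : expo),
  [/\ (i < j)%N, (b i : nat) != 0%N, (b j : nat) != 0%N & w = Dij i j (mon b)].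
Proof.
move=> /mapP [[i [j b]]]; rewrite mem_filter /= => /andP [/and3P [h1 h2 h3] _] ->.
by exists i, j, b.
Qed.


Lemma natF_neq0 m : (0 < m)%N -> (m < p)%N -> (m%:R : F) != 0.
Proof. by move=> h0 hp; rewrite -(dvdn_pcharf charp) gtnNdvd. Qed.

Local Notation BB := (undup (B1 F p n ++ B2 F p n)).

Lemma B2_sub_BB : {subset B2 F p n <= BB}.
Proof. by move=> x hx; rewrite mem_undup mem_cat hx orbT. Qed.
Lemma B1_sub_BB : {subset B1 F p n <= BB}.
Proof. by move=> x hx; rewrite mem_undup mem_cat hx. Qed.

Lemma span2 (a : expo) (k l : 'I_n) : (k < l)%N -> ((a k).+1 < p)%N -> ((a l).+1 < p)%N ->
  EE a k l \in <<B2 F p n>>%VS.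
Proof.
have [N] := ubnP (l - k); elim: N k l => // N IH k l hN hkl hk hl.
case: (boolP (has (fun m : 'I_n => (k < m < l)%N) (Omega a))) => [/hasP [m hm /andP [hkm hml]]|hno].
  rewrite mem_Omega in hm.
  have e := rel3 (neq_of_lt hkm) (neq_of_lt hml) (neq_of_lt hkl) hk hm hl.
  have -> : EE a k l = ((a m).+1%:R)^-1 *: (((a l).+1)%:R *: EE a k m + ((a k).+1)%:R *: EE a m l).
    by rewrite -e scalerA mulVf ?scale1r // natF_neq0.
  apply: memvZ; apply: memvD; apply: memvZ; apply: IH => //; move: hN hkm hml; lia.
apply: memv_span; apply: B2_in; apply: zb_consec; rewrite ?mem_Omega //.
  exact: Omega_sorted.
move=> m hm h1 h2; move/hasP: hno; apply; exists m => //; by rewrite h1 h2.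
Qed.

Lemma Dmon_span_lt (k l : 'I_n) (b : expo) : (k < l)%N -> Dij k l (mon b) \in <<BB>>%VS.
Proof.
move=> hkl; have hlk : (l == k) = false by rewrite eq_sym (negbTE (neq_of_lt hkl)).
have hbk := ltn_ord (b k); have hbl := ltn_ord (b l).
have [bk0|bk0] := eqVneq (b k : nat) 0%N; have [bl0|bl0] := eqVneq (b l : nat) 0%N.
- by rewrite DijmonE bk0 bl0 !scale0r subr0 mem0v.
- rewrite DijmonE bk0 scale0r subr0; apply: memvZ; apply: memv_span; apply: B1_sub_BB.
  apply: (B1_in (j := l)); rewrite ?decE_v ?eqxx ?hlk ?bk0 //.
  by apply/negP => /eqP /= e; move: e bl0 hbl; lia.
- rewrite DijmonE bl0 scale0r sub0r; rewrite memvN; apply: memvZ; apply: memv_span; apply: B1_sub_BB.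
  apply: (B1_in (j := k)); rewrite ?decE_v ?eqxx ?hlk ?bl0 ?subn0 //.
    exact: neq_of_lt.
  by apply/negP => /eqP e; move: e bk0 hbk; lia.
set a := decE (decE b k) l.
have hak : ((a k).+1 < p)%N by rewrite !decE_v eqxx (negbTE (neq_of_lt hkl)); lia.
have hal : ((a l).+1 < p)%N by rewrite !decE_v eqxx hlk; lia.
have -> : b = incE (incE a k) l.
  apply: expoP => t; rewrite incE2_v ?neq_of_lt // !decE_v.
  case: (t =P k) => [ek|nk]; case: (t =P l) => [el|nl] /=.
  - by move: hkl; rewrite -el -ek ltnn.
  - by rewrite ek; move: bk0; lia.
  - by rewrite el; move: bl0; lia.
  - by rewrite !subn0 !addn0.
apply: (subvP (sub_span B2_sub_BB)); exact: span2.
Qed.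

Lemma Dmon_span (k l : 'I_n) (b : expo) : Dij k l (mon b) \in <<BB>>%VS.
Proof.
case: (ltngtP k l) => h; first exact: Dmon_span_lt.
  by rewrite Dij_sym memvN; apply: Dmon_span_lt.
by rewrite (val_inj h) Dij_ii mem0v.
Qed.


Lemma bracket_span (u v : Wn) : in_Stilde u -> in_Stilde v -> bracketW u v \in <<BB>>%VS.
Proof.
move=> hu hv; rewrite bracket_div0 //; apply: memv_suml => k _; apply: memv_suml => l _.
rewrite (expandA (mA _ _)) Dij_lin; apply: memv_suml => b _; apply: memvZ; exact: Dmon_span.
Qed.

Lemma in_Sn_span w : in_Sn w -> w \in <<BB>>%VS.
Proof.
case=> s [hs ->]; rewrite big_seq; apply: memv_suml => t ht; apply: memvZ.
by case: (hs t ht) => h1 h2; apply: bracket_span.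
Qed.

Lemma Stilde_monW (c : expo) q : (c q : nat) = 0%N -> in_Stilde (monW F c q).
Proof.
move=> h0; rewrite /in_Stilde.
under eq_bigr => i _ do rewrite compW_monW.
rewrite (sum_single q) ?eqxx ?derA_mon ?h0 ?scale0r // => i hi.
by rewrite (negbTE hi) derA0.
Qed.

Definition ozero (x : 'I_p) : 'I_p := insubd x 0%N.
Lemma ozero_v x : (ozero x : nat) = 0%N.
Proof. by rewrite val_insubd (leq_ltn_trans (leq0n x) (ltn_ord x)). Qed.

Definition cutE (b : expo) j : expo := [ffun t => if t == j then ozero (b t) else b t].
Definition keepE (b : expo) j : expo := [ffun t => if t == j then b t else ozero (b t)].

Lemma Dij_bracket i j (b : expo) : i != j -> exists u v,
  [/\ in_Stilde u, in_Stilde v & bracketW u v = Dij i j (mon b)].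
Proof.
move=> hij; exists (monW F (cutE b j) j), (monW F (keepE b j) i); split.
- by apply: Stilde_monW; rewrite ffunE eqxx ozero_v.
- by apply: Stilde_monW; rewrite ffunE (negbTE hij) ozero_v.
rewrite bracket_div0; first last.
- by apply: Stilde_monW; rewrite ffunE (negbTE hij) ozero_v.
- by apply: Stilde_monW; rewrite ffunE eqxx ozero_v.
rewrite (sum_single i) => [|k hk]; last first.
  by apply: big1 => l _; rewrite [compW (monW F (keepE b j) i) k]compW_monW (negbTE hk) mulA0r Dij0.
rewrite (sum_single j) => [|l hl]; last by rewrite compW_monW (negbTE hl) mulA0l Dij0.
rewrite !compW_monW !eqxx (@mulA_monE _ _ b) // => t.
by rewrite !ffunE; case: (t == j); rewrite ozero_v ?addn0.
Qed.

Lemma inSn_Dij (c : F) i j (b : expo) : i != j -> in_Sn (c *: Dij i j (mon b)).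
Proof.
move=> hij; have [u [v [hu hv e]]] := Dij_bracket b hij.
exists [:: (c, u, v)]; split.
  by move=> t; rewrite inE => /eqP -> /=.
by rewrite big_seq1 /= e.
Qed.

Lemma B1_Dij (a : expo) i j : (a i : nat) = 0%N -> j != i -> ((a j).+1 < p)%N ->
  Dij i j (mon (incE a j)) = ((a j).+1)%:R *: monW F a i.
Proof.
move=> h0 hji hj; have hij : (i == j) = false by rewrite eq_sym (negbTE hji).
rewrite DijmonE incE_v // eqxx addn1 incE_v // hij addn0 h0 scale0r subr0. congr (_ *: monW F _ _).
apply: expoP => t; rewrite decE_v incE_v //.
by case: (t =P j) => [->|]; rewrite ?addnK ?addn0 ?subn0.
Qed.

Lemma BB_inSn b : b \in BB -> in_Sn b.
Proof.
rewrite mem_undup mem_cat => /orP [/B1_mem [a [i [h0 [j [hji hj]] ->]]]|/B2_mem [a [i [j [h ->]]]]].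
  have hj' : ((a j).+1 < p)%N by have := ltn_ord (a j); move: hj; lia.
  have -> : monW F a i = (((a j).+1)%:R)^-1 *: Dij i j (mon (incE a j)).
    by rewrite B1_Dij // scalerA mulVf ?scale1r // natF_neq0.
  apply: inSn_Dij; by rewrite eq_sym.
have [hij _ _] := zb_props h.
by rewrite -[EE a i j]scale1r; apply: inSn_Dij; apply: neq_of_lt.
Qed.


Lemma addWE (u v : Wn) x : (u + v) x = u x + v x. Proof. by rewrite ffunE. Qed.
Lemma oppWE (u : Wn) x : (- u) x = - u x. Proof. by rewrite ffunE. Qed.
Lemma scaleWE (c : F) (u : Wn) x : (c *: u) x = c * u x. Proof. by rewrite ffunE. Qed.

Lemma monW_val (a : expo) i (c : expo) k : monW F a i (c, k) = ((c == a) && (k == i) : nat)%:R.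
Proof. by rewrite !ffunE /=; case: (k == i); rewrite ?andbT ?andbF ?ffunE. Qed.

Lemma EE_val (a : expo) i j (c : expo) k : i != j -> ((a i).+1 < p)%N -> ((a j).+1 < p)%N ->
  EE a i j (c, k) = ((a j).+1)%:R * ((c == incE a i) && (k == i) : nat)%:R
                   - ((a i).+1)%:R * ((c == incE a j) && (k == j) : nat)%:R.
Proof. by move=> hij hi hj; rewrite Eform // addWE oppWE !scaleWE !monW_val. Qed.

Definition piv (d : expo * 'I_n) (w : Wn) : expo * 'I_n :=
  odflt d [pick ck | (w ck != 0) && [forall ck', (w ck' != 0) ==> (ck.2 <= ck'.2)%N]].

Lemma piv_eq d (w : Wn) ck : w ck != 0 ->
  (forall ck', w ck' != 0 -> ck' = ck \/ (ck.2 < ck'.2)%N) -> piv d w = ck.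
Proof.
move=> hw H; rewrite /piv; case: pickP => [x /andP [h1 /forallP h2]|hn] /=.
  case: (H x h1) => // hlt; have := h2 ck; rewrite hw /= => hle.
  by move: (leq_trans hlt hle); rewrite ltnn.
have := hn ck; rewrite hw /= => /negbT /negP []; apply/forallP => ck'.
by apply/implyP => h; case: (H ck' h) => [->|/ltnW].
Qed.

Lemma monW_nz (a : expo) i ck : monW F a i ck != 0 -> ck = (a, i).
Proof.
case: ck => c k; rewrite monW_val.
by case: (c =P a) => [->|_]; case: (k =P i) => [->|_] //=; rewrite eqxx.
Qed.

Lemma EE_nz (a : expo) i j ck : i != j -> ((a i).+1 < p)%N -> ((a j).+1 < p)%N ->
  EE a i j ck != 0 -> ck = (incE a i, i) \/ ck = (incE a j, j).
Proof.
case: ck => c k hij hi hj; rewrite EE_val //.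
case: (k =P i) => [->|/eqP nki].
  rewrite (negbTE hij) andbF mulr0 subr0.
  by case: (c =P incE a i) => [->|_]; [left | rewrite /= mulr0 eqxx].
rewrite andbF mulr0 sub0r oppr_eq0.
case: (k =P j) => [->|/eqP nkj]; last by rewrite andbF mulr0 eqxx.
by case: (c =P incE a j) => [->|_]; [right | rewrite /= mulr0 eqxx].
Qed.

Lemma piv_monW d (a : expo) i : piv d (monW F a i) = (a, i).
Proof.
apply: piv_eq; first by rewrite monW_val !eqxx oner_eq0.
by move=> ck /monW_nz ->; left.
Qed.

Lemma EE_piv_val (a : expo) (i j : 'I_n) : i != j -> ((a i).+1 < p)%N -> ((a j).+1 < p)%N ->
  EE a i j (incE a i, i) = ((a j).+1)%:R.
Proof.
move=> hij hi hj; rewrite EE_val // !eqxx (negbTE hij) andbF mulr0 subr0 mulr1 //.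
Qed.

Lemma piv_EE d (a : expo) (i j : 'I_n) : (i < j)%N -> ((a i).+1 < p)%N -> ((a j).+1 < p)%N ->
  piv d (EE a i j) = (incE a i, i).
Proof.
move=> hij hi hj; have nij := neq_of_lt hij.
apply: piv_eq; first by rewrite EE_piv_val // natF_neq0.
by move=> ck /EE_nz [] // ->; [left|right].
Qed.


Lemma BB_cases b : b \in BB ->
  (exists (a : expo) (i : 'I_n), (a i : nat) = 0%N /\ b = monW F a i) \/
  (exists (a : expo) (i j : 'I_n), (i, j) \in zip (Omega a) (behead (Omega a)) /\ b = EE a i j).
Proof.
rewrite mem_undup mem_cat => /orP [/B1_mem [a [i [h0 _ ->]]]|/B2_mem [a [i [j [h ->]]]]].
  by left; exists a, i.
by right; exists a, i, j.
Qed.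

Lemma BB_piv_nz d b : b \in BB -> b (piv d b) != 0.
Proof.
case/BB_cases => [[a [i [h0 ->]]]|[a [i [j [h ->]]]]].
  by rewrite piv_monW monW_val !eqxx oner_eq0.
have [hij hi hj] := zb_props h.
by rewrite piv_EE // EE_piv_val ?neq_of_lt // natF_neq0.
Qed.

Lemma incE_inj (a a' : expo) i : ((a i).+1 < p)%N -> ((a' i).+1 < p)%N ->
  incE a i = incE a' i -> a = a'.
Proof.
move=> h h' e; apply: expoP => t; have := congr1 (fun x : expo => (x t : nat)) e.
by rewrite !incE_v //; move/eqP; rewrite eqn_add2r => /eqP.
Qed.

Lemma BB_tri d b b' : b \in BB -> b' \in BB -> b' != b -> b' (piv d b) != 0 ->
  ((piv d b').2 < (piv d b).2)%N.
Proof.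
move=> hb hb' nb; case/BB_cases: hb => [[a [i [h0 eb]]]|[a [i [j [h eb]]]]]; subst b.
  rewrite piv_monW.
  case/BB_cases: hb' nb => [[a' [i' [h0' ->]]]|[a' [k [l [h' ->]]]]] nb.
    by move/monW_nz => [ea ei]; rewrite ea ei eqxx in nb.
  have [hkl hk hl] := zb_props h'.
  case/EE_nz; rewrite ?neq_of_lt // => -[ea ei]; move: h0; rewrite ea ei incE_v //;
    by rewrite eqxx addn1.
have [hij hi hj] := zb_props h.
rewrite piv_EE //.
case/BB_cases: hb' nb => [[a' [i' [h0' ->]]]|[a' [k [l [h' ->]]]]] nb.
  move/monW_nz => [ea ei]; move: h0'; rewrite -ea -ei incE_v // eqxx addn1 //.
have [hkl hk hl] := zb_props h'.
case/EE_nz; rewrite ?neq_of_lt // => -[ea ei].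
  subst k; have eaa := incE_inj hi hk ea; subst a'.
  have elj := zb_uniq (Omega_uniq a) h' h; subst l.
  by rewrite eqxx in nb.
by rewrite piv_EE //= ei.
Qed.

Lemma BB_free (d : expo * 'I_n) : free BB.
Proof.
apply: (tri_free (piv := piv d) (r := fun w => (piv d w).2)); first exact: undup_uniq.
  exact: BB_piv_nz.
exact: BB_tri.
Qed.

Lemma B2_free (d : expo * 'I_n) : free (B2 F p n).
Proof.
apply: (tri_free (piv := piv d) (r := fun w => (piv d w).2)); first exact: undup_uniq.
  by move=> b /B2_sub_BB; apply: BB_piv_nz.
by move=> b b' /B2_sub_BB hb /B2_sub_BB hb'; apply: BB_tri.
Qed.


Lemma V2_eq : V2 F p n = <<B2 F p n>>%VS.
Proof.
apply/eqP; rewrite eqEsubv; apply/andP; split.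
  rewrite V2E; apply/span_subvP => w /V2gens_mem [i [j [b [hij bi0 bj0 ->]]]].
  have hji : (j == i) = false by rewrite eq_sym (negbTE (neq_of_lt hij)).
  have hbi := ltn_ord (b i); have hbj := ltn_ord (b j).
  set a := decE (decE b i) j.
  have hai : ((a i).+1 < p)%N by rewrite !decE_v eqxx (negbTE (neq_of_lt hij)); lia.
  have haj : ((a j).+1 < p)%N by rewrite !decE_v eqxx hji; lia.
  have -> : b = incE (incE a i) j.
    apply: expoP => t; rewrite incE2_v ?neq_of_lt // !decE_v.
    case: (t =P i) => [ei|ni]; case: (t =P j) => [ej|nj] /=.
    - by move: hij; rewrite -ei -ej ltnn.
    - by rewrite ei; move: bi0; lia.
    - by rewrite ej; move: bj0; lia.
    - by rewrite !subn0 !addn0.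
  exact: span2.
apply/span_subvP => w /B2_mem [a [i [j [h ->]]]]; rewrite V2E; apply: memv_span.
have [hij hi hj] := zb_props h.
apply: V2gens_in => //; rewrite incE2_v ?neq_of_lt // eqxx.
  by rewrite addn1.
by rewrite addn1.
Qed.

End Work.

Unset Implicit Arguments.

Theorem corollary4p4 (F : closedFieldType) (p n : nat) :
  prime p -> (2 < p)%N -> p \in [pchar F] -> (2 <= n)%N ->
  basis_of (V2 F p n) (B2 F p n) /\
  is_basis_of (in_Sn (F := F) (p := p) (n := n)) (undup (B1 F p n ++ B2 F p n)).
Proof.
move=> pp p2 ch n2; have p1 : (1 < p)%N by apply: ltnW.
have n0 : (0 < n)%N by apply: leq_trans n2.
pose d : Defs.expo p n * 'I_n := ([ffun => Ordinal (ltnW p1)], Ordinal n0).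
split.
  by rewrite /basis_of (V2_eq n ch p1) eqxx /=; apply: (B2_free ch p1 d).
split.
- exact: (BB_free ch p1 d).
- exact: (BB_inSn ch p1).
- exact: (in_Sn_span ch p1).
Qed.
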